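(* Let $(e_i)$ be a right dominant normalized basis of a Banach space $E$, and let $J(e_i)$, $(u_i)$ be as in the context. There exists a constant $C$ such that the following holds. Whenever $l\in\mathbb N$, $n(1)<n(2)<\dots<n(l+1)$ are positive integers and $(a_j)$ are real numbers such that \[ v_i=\sum_{j=n(i)}^{n(i+1)-1}a_ju_j,\qquad \sum_{j=n(i)}^{n(i+1)-1}a_j=0,\qquad 1\le i\le l, \] there is a block basis $(w_i)_{i=1}^l$ of $(e_i)$ such that $\|w_i\|\le\|v_i\|$ for $1\le i\le l$ and $\|\sum_{i=1}^l v_i\|\le C\|\sum_{i=1}^l w_i\|$.
   Context: A basic sequence $(x_i)$ is right dominant if it is unconditional and there is a constant $D$ such that whenever $1\le m(1)\le n(1)<m(2)\le n(2)<\dots$ and $(a_{n(i)})$ is a finitely nonzero real sequence, $\|\sum a_{n(i)}x_{m(i)}\|\le D\|\sum a_{n(i)}x_{n(i)}\|$. Given a normalized unconditional basis $(e_i)$ of $E$, for finitely nonzero real $(a_i)$ define \[\Big\|\sum a_iu_i\Big\|=\sup\Big\{\Big\|\sum_{i=1}^k\Big(\sum_{j=p(i)}^{p(i+1)-1}a_j\Big)e_{p(i)}\Big\|_E : k\in\mathbb N,\ 1=p(1)<p(2)<\dots<p(k+1)\Big\},\] and let $J(e_i)$ be the completion of the linear span of the formal vectors $(u_i)$ under this norm; $(u_i)$ is a basis of $J(e_i)$. A block basis of a basis $(x_i)$ is a sequence $w_m=\sum_{j=q_m}^{q_{m+1}-1}c_jx_j$ with $q_1<q_2<\cdots$. *)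

(* Defs.v *)
(* Indices are 0-based: e 0 is the paper's e_1. *)
From HB Require Import structures.
From mathcomp Require Import all_boot all_order all_algebra.
From mathcomp Require Import all_classical all_reals all_analysis.
Set Implicit Arguments. Unset Strict Implicit. Unset Printing Implicit Defensive.
Import Order.TTheory GRing.Theory Num.Theory.
Import numFieldNormedType.Exports.
Local Open Scope classical_set_scope.
Local Open Scope ring_scope.

Section Defs.
Context {R : realType} {E : normedModType R}.

Definition schauder_basis (e : nat -> E) : Prop :=
  forall x : E, exists! a : nat -> R,
    (fun N : nat => \sum_(i < N) a i *: e i) @ \oo --> x.

Definition normalized (e : nat -> E) : Prop := forall i, `|e i| = 1.

Definition unconditional (e : nat -> E) : Prop :=
  exists K : R, forall (N : nat) (a : nat -> R) (eps : nat -> bool),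
    `|\sum_(i < N) (if eps i then a i else - a i) *: e i|
      <= K * `|\sum_(i < N) a i *: e i|.

Definition right_dominant (e : nat -> E) : Prop :=
  unconditional e /\
  exists D : R, forall (k : nat) (m n : nat -> nat) (b : nat -> R),
    (forall i, (i < k)%N -> (m i <= n i)%N) ->
    (forall i, (i.+1 < k)%N -> (n i < m i.+1)%N) ->
    `|\sum_(i < k) b i *: e (m i)| <= D * `|\sum_(i < k) b i *: e (n i)|.

Definition is_partition (p : seq nat) : bool :=
  [&& (1 < size p)%N, nth 0%N p 0 == 0%N & sorted ltn p].

Definition Jval (e : nat -> E) (a : nat -> R) (p : seq nat) : R :=
  `| \sum_(i < (size p).-1)
       (\sum_(nth 0%N p i <= j < nth 0%N p i.+1) a j) *: e (nth 0%N p i) |.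

(* the norm of J(e_i) on sum_j a_j u_j (a finitely supported) *)
Definition Jnorm (e : nat -> E) (a : nat -> R) : R :=
  sup [set Jval e a p | p in [set p | is_partition p]].

Definition restr (a : nat -> R) (s t : nat) : nat -> R :=
  fun j => if (s <= j < t)%N then a j else 0.

Definition blk (e : nat -> E) (q : nat -> nat) (c : nat -> R) (i : nat) : E :=
  \sum_(q i <= j < q i.+1) c j *: e j.

End Defs.

(* Main.v *)
Require Import Defs.
From HB Require Import structures.
From mathcomp Require Import all_boot all_order all_algebra.
From mathcomp Require Import all_classical all_reals all_analysis.
From mathcomp Require Import ring lra.
Set Implicit Arguments. Unset Strict Implicit. Unset Printing Implicit Defensive.

Lemma nth_lt (s : seq nat) i j : sorted ltn s -> (i < j)%N -> (j < size s)%N ->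
  (nth 0 s i < nth 0 s j)%N.
Proof.
move=> ss ij js; apply: (sorted_ltn_nth ltn_trans) => //; rewrite inE //.
exact: ltn_trans ij js.
Qed.

Lemma nth_le (s : seq nat) i j : sorted ltn s -> (i <= j)%N -> (j < size s)%N ->
  (nth 0 s i <= nth 0 s j)%N.
Proof.
move=> ss; rewrite leq_eqVlt => /orP[/eqP->//|ij js]; exact/ltnW/nth_lt.
Qed.

Definition nx (s : seq nat) (N x : nat) := nth N s (index x s).+1.
Definition pv (s : seq nat) (y : nat) := nth 0 s (index y s).-1.

Lemma suniq (s : seq nat) : sorted ltn s -> uniq s.
Proof. exact/sorted_uniq/ltnn/ltn_trans. Qed.

Lemma nx_nth s N j : sorted ltn s -> (j < size s)%N -> nx s N (nth 0 s j) = nth N s j.+1.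
Proof. by move=> ss js; rewrite /nx index_uniq // suniq. Qed.

Lemma nx_nth1 s N j : sorted ltn s -> (j.+1 < size s)%N -> nx s N (nth 0 s j) = nth 0 s j.+1.
Proof.
move=> ss js; rewrite nx_nth //; last exact: ltnW.
exact: set_nth_default.
Qed.

Lemma mem_lt (s : seq nat) x y : sorted ltn s -> x \in s -> y \in s ->
  (x < y)%N -> (index x s < index y s)%N.
Proof.
move=> ss xs ys xy; rewrite ltnNge; apply/negP => yx.
have := nth_le ss yx; rewrite index_mem => /(_ xs).
by rewrite !nth_index // leqNgt xy.
Qed.

Lemma nx_spec s N x : sorted ltn s -> all (fun y => y < N)%N s -> x \in s ->
  [/\ (x < nx s N x)%N, (nx s N x <= N)%N, ((nx s N x < N)%N -> nx s N x \in s)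
    & forall z, z \in s -> (x < z)%N -> (nx s N x <= z)%N].
Proof.
move=> ss /allP aN xs; rewrite /nx.
case: (ltnP (index x s).+1 (size s)) => h.
  rewrite (set_nth_default 0) //.
  have hx : x = nth 0 s (index x s) by rewrite nth_index.
  split.
  - by rewrite {1}hx; apply: nth_lt.
  - by apply/ltnW; apply: aN; apply: mem_nth.
  - by move=> _; apply: mem_nth.
  - move=> z zs xz; have := mem_lt ss xs zs xz => iz.
    by move: (nth_le ss iz); rewrite index_mem (nth_index 0 zs); apply.
rewrite nth_default //; split => //; first exact: aN.
  by rewrite ltnn.
move=> z zs xz; have := mem_lt ss xs zs xz => iz.
by have := leq_trans h iz; rewrite leqNgt index_mem zs.
Qed.

Lemma nx_eq s N x y : sorted ltn s -> all (fun y => y < N)%N s -> x \in s ->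
  (x < y)%N -> (y <= N)%N -> ((y < N)%N -> y \in s) ->
  (forall z, z \in s -> (x < z)%N -> (y <= z)%N) -> nx s N x = y.
Proof.
move=> ss aN xs xy yN yin ymin.
have [h1 h2 h3 h4] := nx_spec ss aN xs.
apply/eqP; rewrite eqn_leq; apply/andP; split.
  case: (ltnP y N) => yN'; first by apply: h4 => //; apply: yin.
  by apply: leq_trans h2 yN'.
case: (ltnP (nx s N x) N) => nN; first by apply: ymin => //; apply: h3.
exact: leq_trans yN nN.
Qed.

Lemma nx_index s N x : sorted ltn s -> all (fun y => y < N)%N s -> x \in s ->
  (nx s N x < N)%N -> index (nx s N x) s = (index x s).+1.
Proof.
move=> ss aN xs; rewrite /nx.
case: (ltnP (index x s).+1 (size s)) => h.
  by rewrite index_uniq // suniq.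
by rewrite nth_default // ltnn.
Qed.

Lemma pv_nx s N x : sorted ltn s -> all (fun y => y < N)%N s -> x \in s ->
  (nx s N x < N)%N -> pv s (nx s N x) = x.
Proof. by move=> ss aN xs h; rewrite /pv nx_index //= nth_index. Qed.

Lemma pv_spec s N y u : sorted ltn s -> all (fun y => y < N)%N s -> y \in s -> u \in s ->
  (u < y)%N -> [/\ pv s y \in s, (pv s y < y)%N, (u <= pv s y)%N & nx s N (pv s y) = y].
Proof.
move=> ss aN ys us uy.
have iu := mem_lt ss us ys uy.
have iy : (index y s < size s)%N by rewrite index_mem.
have ip : ((index y s).-1 < size s)%N by apply: leq_ltn_trans iy; apply: leq_pred.
have e1 : (index y s).-1.+1 = index y s by rewrite prednK //; apply: leq_ltn_trans iu.
rewrite /pv; split.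
- exact: mem_nth.
- by rewrite -{2}(nth_index 0 ys); apply: nth_lt => //; rewrite -{2}e1.
- rewrite -(nth_index 0 us); apply: nth_le => //; rewrite -ltnS e1 //.
- by rewrite nx_nth1 ?e1 // nth_index.
Qed.

Lemma le_last (s : seq nat) z : sorted ltn s -> z \in s -> (z <= last 0 s)%N.
Proof.
move=> ss zs; have s0 : (0 < size s)%N by case: s zs ss.
rewrite -(nth_index 0 zs) -nth_last; apply: nth_le => //.
  by rewrite -ltnS prednK // index_mem.
by rewrite prednK.
Qed.

Import Order.TTheory GRing.Theory Num.Theory.
Import numFieldNormedType.Exports.
Local Open Scope classical_set_scope.
Local Open Scope ring_scope.

Definition H {R : realType} (b : nat -> R) (x : nat) : R := \sum_(0 <= j < x) b j.

Lemma blocksum {R : realType} (b : nat -> R) x y : (x <= y)%N ->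
  \sum_(x <= j < y) b j = H b y - H b x.
Proof. by move=> xy; rewrite /H (big_cat_nat (leq0n x) xy) /= addrC addrK. Qed.

Lemma mono_le (f : nat -> nat) k i j : (forall i, (i < k)%N -> (f i <= f i.+1)%N) ->
  (i <= j)%N -> (j <= k)%N -> (f i <= f j)%N.
Proof.
move=> h; elim: j => [|j IH]; first by rewrite leqn0 => /eqP->.
rewrite leq_eqVlt => /orP[/eqP->//|ij] jk.
by apply: leq_trans (IH ij (ltnW jk)) (h _ jk).
Qed.

Lemma tele (V : zmodType) (f : nat -> nat) k (g : nat -> V) :
  (forall i, (i < k)%N -> (f i <= f i.+1)%N) ->
  \sum_(i < k) \sum_(f i <= j < f i.+1) g j = \sum_(f 0%N <= j < f k) g j.
Proof.
elim: k => [|k IH] h; first by rewrite big_ord0 big_geq.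
rewrite big_ord_recr /= IH; last by move=> i ik; apply: h; apply: ltnW.
rewrite -big_cat_nat //; last exact: h.
by apply: (mono_le h).
Qed.

Lemma sum_range (V : zmodType) (f : nat -> V) m k N : (m <= k)%N -> (k <= N)%N ->
  \sum_(t < N) (if (m <= t < k)%N then f t else 0) = \sum_(m <= t < k) f t.
Proof.
move=> mk kN.
rewrite -(big_mkord xpredT (fun t => if (m <= t < k)%N then f t else 0)) (big_cat_nat (leq0n m)) ?(leq_trans mk kN) //=.
rewrite (big_cat_nat mk kN) /=.
rewrite [X in X + _]big1_seq ?add0r; last first.
  by move=> t /andP[_]; rewrite mem_index_iota => /andP[_ tm]; rewrite leqNgt tm.
rewrite [X in _ + X]big1_seq ?addr0; last first.
  by move=> t /andP[_]; rewrite mem_index_iota => /andP[kt _]; rewrite ltnNge kt andbF.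
by apply: eq_big_nat => t ->.
Qed.

Lemma sum_delta (V : zmodType) (x : V) u N : (u < N)%N ->
  \sum_(t < N) (if t == u :> nat then x else 0) = x.
Proof.
move=> uN; rewrite (bigD1 (Ordinal uN)) //= eqxx big1 ?addr0 // => i ne.
case: eqP => // h; exfalso; move/negP: ne; apply; apply/eqP/val_inj => //.
Qed.

Section S.
Variables (R : realType) (E : normedModType R) (e : nat -> E).

Lemma conv s N (F : nat -> nat -> R) (g : nat -> E) :
  sorted ltn s -> all (fun y => y < N)%N s ->
  \sum_(j < size s) F (nth 0%N s j) (nth N s j.+1) *: g (nth 0%N s j)
  = \sum_(t < N) (if (t : nat) \in s then F t (nx s N t) else 0) *: g t.
Proof.
move=> ss aN.
rewrite [RHS](eq_bigr (fun t : 'I_N => if (val t) \in s then F t (nx s N t) *: g t else 0));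
  last by move=> t _; case: ifP; rewrite ?scale0r.
rewrite -big_mkcond /= -(big_mkord (fun t => t \in s) (fun t => F t (nx s N t) *: g t)) -(big_filter (index_iota 0 N)).
rewrite (perm_big s); last first.
  apply: uniq_perm; first by apply: filter_uniq; apply: iota_uniq.
    exact: suniq.
  move=> x; rewrite mem_filter mem_iota /= add0n.
  case xs: (x \in s) => //=.
  by rewrite subn0; move/allP: aN => /(_ _ xs).
rewrite [RHS](big_nth 0%N) big_mkord; apply: eq_bigr => j _.
by rewrite nx_nth.
Qed.

Lemma jform s N (F : nat -> nat -> R) (g : nat -> E) : (0 < size s)%N ->
  \sum_(j < (size s).-1) F (nth 0%N s j) (nth 0%N s j.+1) *: g (nth 0%N s j)
    + F (last 0%N s) N *: g (last 0%N s)
  = \sum_(j < size s) F (nth 0%N s j) (nth N s j.+1) *: g (nth 0%N s j).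
Proof.
move=> s0; have hk : size s = (size s).-1.+1 by rewrite prednK.
rewrite [in RHS]hk big_ord_recr /= -hk (@nth_default _ N s (size s)) // nth_last.
congr (_ + _); apply: eq_bigr => j _.
rewrite (set_nth_default 0%N N) //.
by have := ltn_ord j; rewrite -ltnS -hk.
Qed.

Lemma proj_le K : (forall N (a : nat -> R) (eps : nat -> bool),
    `|\sum_(i < N) (if eps i then a i else - a i) *: e i| <= K * `|\sum_(i < N) a i *: e i|) ->
  forall N (c : nat -> R) (T : pred nat),
  `|\sum_(t < N) (if T t then c t else 0) *: e t| <= (1 + K) / 2 * `|\sum_(t < N) c t *: e t|.
Proof.
move=> hK N c T.
have -> : \sum_(t < N) (if T t then c t else 0) *: e t =
   2^-1 *: (\sum_(t < N) c t *: e t + \sum_(t < N) (if T t then c t else - c t) *: e t).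
  rewrite -big_split scaler_sumr; apply: eq_bigr => t _.
  case: (T t) => /=; rewrite -scalerDl scalerA; congr (_ *: _).
    by field.
  by rewrite subrr mulr0.
rewrite normrZ ger0_norm; last by rewrite invr_ge0.
set X := \sum_(t < N) c t *: e t.
set Y := \sum_(t < N) (if T t then c t else - c t) *: e t.
have hB : `|Y| <= K * `|X| := hK N c T.
have h1 : `|X + Y| <= `|X| + `|Y| := ler_normD _ _.
have h2 : `|X + Y| <= (1 + K) * `|X|.
  by rewrite mulrDl mul1r; apply: le_trans h1 _; rewrite lerD2l.
rewrite [(1 + K) / 2]mulrC -mulrA; apply: ler_wpM2l => //; by rewrite invr_ge0.
Qed.

Hypothesis en : normalized e.

Lemma Jval_bound (b : nat -> R) M p : (forall j, (M <= j)%N -> b j = 0) ->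
  is_partition p -> Jval e b p <= \sum_(j < M) `|b j|.
Proof.
move=> bM /and3P[sp /eqP p0 ss].
rewrite /Jval; apply: le_trans (ler_norm_sum _ _ _) _.
have mono : forall i, (i < (size p).-1)%N -> (nth 0%N p i <= nth 0%N p i.+1)%N.
  move=> i ik; apply: nth_le => //; by rewrite -ltn_predRL.
apply: le_trans (_ : \sum_(i < (size p).-1) \sum_(nth 0%N p i <= j < nth 0%N p i.+1) `|b j| <= _).
  apply: ler_sum => i _; rewrite normrZ en mulr1; exact: ler_norm_sum.
rewrite (@tele _ (fun i => nth 0%N p i) _ (fun j => `|b j|) mono) p0 -(big_mkord xpredT (fun j => `|b j|)).
set x := nth 0%N p _.
case: (leqP x M) => xM.
  rewrite [X in _ <= X](big_cat_nat (leq0n x) xM) /= lerDl.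
  by apply: sumr_ge0 => j _; apply: normr_ge0.
rewrite (big_cat_nat (leq0n M) (ltnW xM)) /= [X in _ + X]big1_seq ?addr0 //.
by move=> j /andP[_]; rewrite mem_index_iota => /andP[Mj _]; rewrite bM ?normr0.
Qed.

Definition Jset (b : nat -> R) := [set Jval e b p | p in [set p | is_partition p]].

Lemma Jset_ub b M : (forall j, (M <= j)%N -> b j = 0) -> has_ubound (Jset b).
Proof.
move=> bM; exists (\sum_(j < M) `|b j|) => x [p pp <-].
exact: Jval_bound.
Qed.

Lemma Jval_le_Jnorm b M p : (forall j, (M <= j)%N -> b j = 0) ->
  is_partition p -> Jval e b p <= Jnorm e b.
Proof.
move=> bM pp; apply: (ub_le_sup (Jset_ub bM)).
by exists p.
Qed.

Lemma near_opt b M : (forall j, (M <= j)%N -> b j = 0) ->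
  exists p, is_partition p /\ Jnorm e b <= 2 * Jval e b p.
Proof.
move=> bM.
have p01 : is_partition [:: 0%N; 1%N] by [].
case: (lerP (Jnorm e b) 0) => h.
  exists [:: 0%N; 1%N]; split => //; apply: le_trans h _.
  by apply: mulr_ge0 => //; apply: normr_ge0.
have hs : has_sup (Jset b).
  by split; [exists (Jval e b [:: 0%N; 1%N]); exists [:: 0%N; 1%N] | exact: Jset_ub bM].
have [x [p pp <-] hx] := sup_adherent (divr_gt0 h (ltr0n R 2)) hs.
exists p; split => //.
have ej : Jnorm e b = sup (Jset b) by [].
rewrite ej in hx h *; lra.
Qed.

End S.

Lemma H_restr_lo {R : realType} (b : nat -> R) s t x : (x <= s)%N -> H (restr b s t) x = 0.
Proof.
move=> xs; rewrite /H big1_seq // => j /andP[_]; rewrite mem_index_iota => /andP[_ jx].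
by rewrite /restr leqNgt (leq_trans jx xs).
Qed.

Lemma H_restr_mid {R : realType} (b : nat -> R) s t x : (s <= x)%N -> (x <= t)%N ->
  H (restr b s t) x = \sum_(s <= j < x) b j.
Proof.
move=> sx xt; rewrite /H (big_cat_nat (leq0n s) sx) /=.
rewrite -/(H (restr b s t) s) H_restr_lo // add0r.
apply: eq_big_nat => j /andP[sj jx]; by rewrite /restr sj (leq_trans jx xt).
Qed.

Lemma H_restr_hi {R : realType} (b : nat -> R) s t x : (s <= t)%N -> (t <= x)%N ->
  H (restr b s t) x = \sum_(s <= j < t) b j.
Proof.
move=> st tx; rewrite /H (big_cat_nat (leq0n t) tx) /=.
rewrite -/(H (restr b s t) t) H_restr_mid // [X in _ + X = _]big1_seq ?addr0 //.
by move=> j /andP[_]; rewrite mem_index_iota => /andP[tj _]; rewrite /restr ltnNge tj andbF.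
Qed.

Section Main.
Variables (R : realType) (E : normedModType R) (e : nat -> E).
Hypothesis en : normalized e.
Variables (l : nat) (n : nat -> nat) (a : nat -> R).
Hypothesis hn : forall i, (i < l)%N -> (n i < n i.+1)%N.
Hypothesis ha : forall i, (i < l)%N -> \sum_(n i <= j < n i.+1) a j = 0.

Definition al := restr a (n 0) (n l).
Definition G := H al.

Lemma hn' i : (i < l)%N -> (n i <= n i.+1)%N.
Proof. by move=> il; apply/ltnW/hn. Qed.

Lemma nmono i j : (i <= j)%N -> (j <= l)%N -> (n i <= n j)%N.
Proof. exact: mono_le hn'. Qed.

Lemma sum0 i : (i <= l)%N -> \sum_(n 0 <= j < n i) a j = 0.
Proof.
move=> il; rewrite -(@tele _ n i a); last by move=> j ji; apply: hn'; apply: leq_trans ji il.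
by rewrite big1 // => j _; apply: ha; apply: leq_trans (ltn_ord j) il.
Qed.

Lemma n0l : (n 0 <= n l)%N.
Proof. exact: nmono. Qed.

Lemma G_lo x : (x <= n 0)%N -> G x = 0.
Proof. exact: H_restr_lo. Qed.

Lemma G_hi x : (n l <= x)%N -> G x = 0.
Proof. by move=> lx; rewrite /G /al H_restr_hi // ?n0l // sum0. Qed.

Lemma G_mid x : (n 0 <= x)%N -> (x <= n l)%N -> G x = \sum_(n 0 <= j < x) a j.
Proof. exact: H_restr_mid. Qed.

Lemma G_n i : (i <= l)%N -> G (n i) = 0.
Proof. by move=> il; rewrite G_mid ?sum0 //; apply: nmono. Qed.

Definition Gi i := H (restr a (n i) (n i.+1)).

Lemma Gi_lo i x : (x <= n i)%N -> Gi i x = 0.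
Proof. exact: H_restr_lo. Qed.

Lemma Gi_hi i x : (i < l)%N -> (n i.+1 <= x)%N -> Gi i x = 0.
Proof. by move=> il hx; rewrite /Gi H_restr_hi ?ha // hn'. Qed.

Lemma Gi_mid i x : (i < l)%N -> (n i <= x)%N -> (x <= n i.+1)%N -> Gi i x = G x.
Proof.
move=> il h1 h2.
have h0 : (n 0 <= n i)%N by apply: nmono => //; apply: ltnW.
have hl : (n i.+1 <= n l)%N by apply: nmono.
rewrite /Gi H_restr_mid // G_mid; first last.
- exact: leq_trans h2 hl.
- exact: leq_trans h0 h1.
rewrite [RHS](big_cat_nat (n:=n i)) //= sum0 ?add0r //; exact: ltnW.
Qed.


Variable p : seq nat.
Hypothesis pp : is_partition p.

Lemma p_sorted : sorted ltn p. Proof. by case/and3P: pp. Qed.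
Lemma p_head : nth 0%N p 0 = 0%N. Proof. by case/and3P: pp => _ /eqP. Qed.
Lemma p_size : (1 < size p)%N. Proof. by case/and3P: pp. Qed.

Definition N := (last 0%N p + n l).+1.

Lemma aNp : all (fun y => y < N)%N p.
Proof.
apply/allP => z zs; rewrite /N ltnS; apply: leq_trans (le_last p_sorted zs) _.
exact: leq_addr.
Qed.

Lemma lN : (n l < N)%N. Proof. by rewrite /N ltnS leq_addl. Qed.

Definition bnd x := has (fun i => n i == x) (iota 0 l.+1).

Lemma bnd_n i : (i <= l)%N -> bnd (n i).
Proof. by move=> il; apply/hasP; exists i => //; rewrite mem_iota. Qed.

Lemma bnd_le x : bnd x -> (x <= n l)%N.
Proof.
by case/hasP => i; rewrite mem_iota add0n ltnS => /andP[_ il] /eqP <-; apply: nmono.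
Qed.

Lemma bnd_G x : bnd x -> G x = 0.
Proof.
by case/hasP => i; rewrite mem_iota add0n ltnS => /andP[_ il] /eqP <-; apply: G_n.
Qed.

Definition Qp x := (x \in p) || bnd x.
Definition Qs := seq.filter Qp (iota 0 N).

Lemma sQ : sorted ltn Qs.
Proof. exact/sorted_filter/iota_ltn_sorted/ltn_trans. Qed.

Lemma memQ x : (x \in Qs) = Qp x && (x < N)%N.
Proof. by rewrite mem_filter mem_iota add0n. Qed.

Lemma aQ : all (fun y => y < N)%N Qs.
Proof. by apply/allP => x; rewrite memQ => /andP[]. Qed.

Lemma pQ x : x \in p -> x \in Qs.
Proof. by move=> xp; rewrite memQ /Qp xp /=; move/allP: aNp => /(_ _ xp). Qed.

Lemma bQ x : bnd x -> x \in Qs.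
Proof.
move=> bx; rewrite memQ /Qp bx orbT /=; apply: leq_ltn_trans lN.
exact: bnd_le.
Qed.

Lemma Qnp x : x \in Qs -> x \notin p -> G x = 0.
Proof. by rewrite memQ /Qp => /andP[/orP[->//|/bnd_G]]. Qed.

Lemma GN : G N = 0.
Proof. by apply: G_hi; apply: ltnW; apply: lN. Qed.

Definition cW t := if t \in Qs then G (nx Qs N t) - G t else 0.

Lemma cW_out t : ((t < n 0)%N || (n l <= t)%N) -> cW t = 0.
Proof.
rewrite /cW; case tQ: (t \in Qs) => // /orP[h|h].
  have [h1 h2 h3 h4] := nx_spec sQ aQ tQ.
  rewrite !G_lo ?subrr //; first exact: ltnW.
  by apply: h4 => //; apply: bQ; apply: bnd_n.
have [h1 h2 h3 h4] := nx_spec sQ aQ tQ.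
rewrite !G_hi ?subrr //; apply: ltnW; exact: leq_ltn_trans h h1.
Qed.

Definition W := \sum_(t < N) cW t *: e t.

Lemma W_blocks : \sum_(i < l) blk e n cW i = W.
Proof.
rewrite /blk (@tele _ n l (fun j => cW j *: e j) hn').
rewrite -(sum_range (fun j => cW j *: e j) n0l (ltnW lN)) /W.
apply: eq_bigr => t _; case: ifP => // h.
rewrite cW_out ?scale0r //.
by move/negbT: h; rewrite negb_and -!ltnNge.
Qed.


Section Block.
Variable i : nat.
Hypothesis il : (i < l)%N.

Definition Pi x := (x == 0%N) || ((n i <= x <= n i.+1)%N && Qp x).
Definition si := seq.filter Pi (iota 0 N).

Lemma ssi : sorted ltn si.
Proof. exact/sorted_filter/iota_ltn_sorted/ltn_trans. Qed.

Lemma memsi x : (x \in si) = Pi x && (x < N)%N.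
Proof. by rewrite mem_filter mem_iota add0n. Qed.

Lemma asi : all (fun y => y < N)%N si.
Proof. by apply/allP => x; rewrite memsi => /andP[]. Qed.

Lemma ni1N : (n i.+1 < N)%N.
Proof. by apply: leq_ltn_trans lN; apply: nmono. Qed.

Lemma ni_si : n i \in si.
Proof.
rewrite memsi /Pi leqnn /= (ltnW (hn il)) /Qp bnd_n ?orbT ?orbT /=; last exact: ltnW.
by apply: ltn_trans ni1N; apply: hn.
Qed.

Lemma ni1_si : n i.+1 \in si.
Proof.
by rewrite memsi /Pi leqnn (ltnW (hn il)) /Qp bnd_n ?orbT ?orbT //= ni1N.
Qed.

Lemma coef_si t : (t < N)%N ->
  (if t \in si then Gi i (nx si N t) - Gi i t else 0)
  = (if (n i <= t < n i.+1)%N then cW t else 0).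
Proof.
move=> tN.
case: (boolP (n i <= t < n i.+1)%N) => hin.
  move/andP: hin => [h1 h2].
  case: (boolP (Qp t)) => hq.
    have ts : t \in si by rewrite memsi tN /Pi h1 (ltnW h2) hq orbT.
    have tQ : t \in Qs by rewrite memQ hq tN.
    have [y1 y2 y3 y4] := nx_spec sQ aQ tQ.
    set y := nx Qs N t in y1 y2 y3 y4 *.
    have yn : (y <= n i.+1)%N by apply: y4 => //; apply: bQ; apply: bnd_n.
    have ey : nx si N t = y.
      apply: nx_eq => //; [exact: ssi | exact: asi | |].
        move=> yN; rewrite memsi yN andbT /Pi yn (leq_trans h1 (ltnW y1)) /=.
        by move: (y3 yN); rewrite memQ => /andP[-> _]; rewrite orbT.
      move=> z; rewrite memsi /Pi => /andP[hz zN] tz.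
      apply: y4 => //; rewrite memQ zN andbT.
      move: hz => /orP[/eqP z0|/andP[_ ->]] //.
      by rewrite z0 in tz.
    rewrite ts ey /cW tQ !Gi_mid //; first exact: ltnW.
    exact: leq_trans h1 (ltnW y1).
  have tsi : t \in si = false.
    rewrite memsi /Pi (negbTE hq) andbF orbF.
    apply/negbTE; apply/negP => /andP[/eqP t0 _].
    move: hq; rewrite /Qp t0 => /negP; apply; apply/orP; right.
    have : n i = 0%N by apply/eqP; rewrite -leqn0 -t0.
    by move=> <-; apply: bnd_n; apply: ltnW.
  rewrite tsi /cW; suff -> : (t \in Qs) = false by [].
  by rewrite memQ (negbTE hq).
case ts: (t \in si) => //.
have [y1 y2 y3 y4] := nx_spec ssi asi ts.
case: (leqP (n i.+1) t) => h.
  by rewrite !Gi_hi ?subrr //; apply: ltnW; apply: leq_ltn_trans h y1.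
have ti : (t < n i)%N by move: hin; rewrite h andbT -ltnNge.
have hy : (nx si N t <= n i)%N by apply: y4 => //; exact: ni_si.
by rewrite !Gi_lo ?subrr // ltnW.
Qed.

Lemma si_part : is_partition si.
Proof.
have e0 : si = 0%N :: seq.filter Pi (iota 1 (last 0%N p + n l)) by [].
apply/and3P; split; last exact: ssi.
  rewrite e0 /= ltnS lt0n size_eq0; apply/eqP => h.
  have := ni1_si; rewrite e0 h inE => /eqP h0.
  by have := hn il; rewrite h0.
by rewrite e0.
Qed.

Lemma blk_Jval : Jval e (restr a (n i) (n i.+1)) si = `|blk e n cW i|.
Proof.
have s0 : (0 < size si)%N by case/and3P: si_part => h _ _; apply: ltnW.
rewrite /Jval; congr (`| _ |).
rewrite (eq_bigr (fun j : 'I_(size si).-1 =>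
   (Gi i (nth 0%N si j.+1) - Gi i (nth 0%N si j)) *: e (nth 0%N si j))); last first.
  move=> j _; rewrite blocksum //; apply: nth_le; [exact: ssi | exact: leqnSn |].
  by rewrite -ltn_predRL.
have := jform N (fun x y => Gi i y - Gi i x) e s0.
rewrite (@conv _ _ si N (fun x y => Gi i y - Gi i x) e ssi asi).
have hl1 : Gi i N = 0 by apply: Gi_hi => //; apply: ltnW; exact: ni1N.
have hl2 : Gi i (last 0%N si) = 0.
  by apply: Gi_hi => //; apply: le_last; [exact: ssi | exact: ni1_si].
rewrite hl1 hl2 subrr scale0r addr0 => ->.
rewrite /blk -(sum_range (fun j => cW j *: e j) (ltnW (hn il)) (ltnW ni1N)).
apply: eq_bigr => t _; rewrite coef_si //.
by case: ifP => //; rewrite scale0r.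
Qed.

Lemma blk_le : `|blk e n cW i| <= Jnorm e (restr a (n i) (n i.+1)).
Proof.
rewrite -blk_Jval; apply: (Jval_le_Jnorm en (M := n i.+1)); last exact: si_part.
by move=> j hj; rewrite /restr ltnNge hj andbF.
Qed.

End Block.


Definition k := (size p).-1.
Definition tL := last 0%N p.

Lemma p_s0 : (0 < size p)%N. Proof. exact: ltnW p_size. Qed.

Lemma tLp : tL \in p.
Proof. by rewrite /tL -nth_last mem_nth // prednK // p_s0. Qed.

Lemma pN x : x \in p -> (x < N)%N.
Proof. by move/allP: aNp => h /h. Qed.

Lemma kS j : (j < k)%N -> (j.+1 < size p)%N.
Proof. by rewrite /k -ltn_predRL. Qed.

Definition cp t := if t \in p then G (nx p N t) - G t else 0.
Definition d1 t := if t \in p then (if (nx Qs N t < nx p N t)%N then G (nx p N t) else 0) else 0.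
Definition d2 t := if (t \in Qs) && (t \notin p) then G (nx Qs N t) else 0.

Lemma cp_dec t : cp t = cW t + d1 t - d2 t.
Proof.
rewrite /cp /d1 /d2 /cW.
case tp: (t \in p) => /=.
  have tQ := pQ tp; rewrite tQ /=.
  have [p1 p2 p3 p4] := nx_spec p_sorted aNp tp.
  have [q1 q2 q3 q4] := nx_spec sQ aQ tQ.
  have le : (nx Qs N t <= nx p N t)%N.
    case: (ltnP (nx p N t) N) => h; last exact: leq_trans q2 h.
    by apply: q4 => //; apply: pQ; exact: p3.
  case: ifP => h.
    have uN : (nx Qs N t < N)%N by apply: leq_trans h p2.
    have up : nx Qs N t \notin p.
      by apply/negP => up; have := p4 _ up q1; rewrite leqNgt h.
    rewrite (Qnp (q3 uN) up); lra.
  have -> : nx Qs N t = nx p N t by apply/eqP; rewrite eqn_leq le leqNgt h.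
  lra.
case tQ: (t \in Qs) => /=.
  rewrite (Qnp tQ (negbT tp)); lra.
lra.
Qed.

Definition vd1 := \sum_(t < N) d1 t *: e t.
Definition vd2 := \sum_(t < N) d2 t *: e t.
Definition Vp := \sum_(j < k) (G (nth 0%N p j.+1) - G (nth 0%N p j)) *: e (nth 0%N p j).

Lemma Jval_al : Jval e al p = `|Vp|.
Proof.
rewrite /Jval /Vp; congr (`| _ |); apply: eq_bigr => j _.
rewrite blocksum //; apply: nth_le; [exact: p_sorted | exact: leqnSn | exact: kS].
Qed.

Lemma Vp_eq : Vp = W + vd1 - vd2 + G tL *: e tL.
Proof.
have := jform N (fun x y => G y - G x) e p_s0.
rewrite (@conv _ _ p N (fun x y => G y - G x) e p_sorted aNp) GN sub0r => h.
have hc : \sum_(t < N) (if (t : nat) \in p then G (nx p N t) - G t else 0) *: e t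
    = W + vd1 - vd2.
  rewrite /W /vd1 /vd2 -big_split -sumrB /=; apply: eq_bigr => t _.
  by rewrite -scalerDl -scalerBl -cp_dec.
by rewrite -hc -h scaleNr addrNK.
Qed.

Lemma vd2_proj : vd2 = \sum_(t < N) (if ((t : nat) \in Qs) && ((t : nat) \notin p) then cW t else 0) *: e t.
Proof.
apply: eq_bigr => t _; rewrite /d2 /cW; case: ifP => // /andP[tQ tp].
by rewrite tQ (Qnp tQ tp) subr0.
Qed.

Lemma cW_tL : cW tL = - G tL.
Proof.
have tQ := pQ tLp; rewrite /cW tQ.
have [q1 q2 q3 q4] := nx_spec sQ aQ tQ.
case: (ltnP (nx Qs N tL) N) => h.
  have up : nx Qs N tL \notin p.
    apply/negP => up; have := le_last p_sorted up; rewrite -/tL leqNgt q1 //.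
  by rewrite (Qnp (q3 h) up) sub0r.
have -> : nx Qs N tL = N by apply/eqP; rewrite eqn_leq q2 h.
by rewrite GN sub0r.
Qed.

Lemma tL_proj : \sum_(t < N) (if (t : nat) == tL then cW t else 0) *: e t = - (G tL *: e tL).
Proof.
rewrite (eq_bigr (fun t : 'I_N => if (t : nat) == tL then cW tL *: e tL else 0)).
  by rewrite sum_delta ?pN ?tLp // cW_tL scaleNr.
by move=> t _; case: ifP => [/eqP ->|_]; rewrite ?scale0r.
Qed.


Definition F1 x y := if (nx Qs N x < y)%N then G y else 0.
Definition bb j := F1 (nth 0%N p j) (nth 0%N p j.+1).
Definition zeta j := if (nx Qs N (nth 0%N p j) < nth 0%N p j.+1)%N
  then pv Qs (nth 0%N p j.+1) else nth 0%N p j.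

Lemma vd1_eq : vd1 = \sum_(j < k) bb j *: e (nth 0%N p j).
Proof.
have := jform N F1 e p_s0.
rewrite (@conv _ _ p N F1 e p_sorted aNp).
have -> : F1 (last 0%N p) N = 0 by rewrite /F1 GN; case: ifP.
by rewrite scale0r addr0 => h; apply: esym.
Qed.

Lemma Zl j : (j.+1 < size p)%N -> (nx Qs N (nth 0%N p j) < nth 0%N p j.+1)%N ->
  [/\ (nth 0%N p j < pv Qs (nth 0%N p j.+1))%N, (pv Qs (nth 0%N p j.+1) < nth 0%N p j.+1)%N,
      pv Qs (nth 0%N p j.+1) \in Qs, pv Qs (nth 0%N p j.+1) \notin p
    & nx Qs N (pv Qs (nth 0%N p j.+1)) = nth 0%N p j.+1].
Proof.
move=> js h.
have xp : nth 0%N p j \in p by apply: mem_nth; apply: ltnW.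
have yp : nth 0%N p j.+1 \in p by apply: mem_nth.
have [q1 q2 q3 q4] := nx_spec sQ aQ (pQ xp).
have uN : (nx Qs N (nth 0%N p j) < N)%N by apply: ltn_trans h (pN yp).
have [v1 v2 v3 v4] := pv_spec sQ aQ (pQ yp) (q3 uN) h.
split => //; first exact: leq_trans q1 v3.
apply/negP => vp.
have [p1 p2 p3 p4] := nx_spec p_sorted aNp xp.
have := p4 _ vp (leq_trans q1 v3).
by rewrite nx_nth1 // ?p_sorted // leqNgt v2.
Qed.

Lemma zetaN (j : 'I_k) : (zeta j < N)%N.
Proof.
have js := kS (ltn_ord j).
have yN : (nth 0%N p j.+1 < N)%N by apply: pN; apply: mem_nth.
rewrite /zeta; case: ifP => h; first by case: (Zl js h) => _ h2 _ _ _; apply: ltn_trans h2 yN.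
by apply: ltn_trans yN; apply: nth_lt => //; exact: p_sorted.
Qed.

Definition TT t := [&& t \in Qs, t \notin p & nx Qs N t \in p].

Lemma zeta_coef t : (t < N)%N ->
  \sum_(j < k) (if t == zeta j then bb j else 0) = if TT t then cW t else 0.
Proof.
move=> tN.
have hj : forall j : 'I_k, t = zeta j -> bb j != 0 ->
    [/\ t \in Qs, t \notin p & nx Qs N t = nth 0%N p j.+1].
  move=> j tz; rewrite /bb /F1; case: ifP => h; last by rewrite eqxx.
  move=> _; have [_ _ h3 h4 h5] := Zl (kS (ltn_ord j)) h.
  by rewrite tz /zeta h.
case hT: (TT t); last first.
  apply: big1 => j _; case: eqP => // /hj tz; case: (bb j =P 0) => // /eqP bn.
  have [tQ tp ey] := tz bn.
  by move: hT; rewrite /TT tQ tp ey mem_nth //; apply: kS.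
move/and3P: hT => [tQ tp yp].
have [q1 q2 q3 q4] := nx_spec sQ aQ tQ.
set y := nx Qs N t in q1 q2 q3 q4 yp *.
have yN : (y < N)%N := pN yp.
have iy : (index y p < size p)%N by rewrite index_mem.
have iy0 : (0 < index y p)%N.
  rewrite lt0n; apply/negP => /eqP i0.
  have := nth_index 0%N yp; rewrite i0 p_head => y0.
  by move: q1; rewrite -y0.
set j0 := (index y p).-1.
have hj0 : j0.+1 = index y p by rewrite prednK.
have j0k : (j0 < k)%N by rewrite /k ltn_predRL hj0.
have ey : nth 0%N p j0.+1 = y by rewrite hj0 nth_index.
have xp : nth 0%N p j0 \in p by apply: mem_nth; apply: ltn_trans iy; rewrite -hj0.
have xy : (nth 0%N p j0 < y)%N by rewrite -ey; apply: nth_lt; [exact: p_sorted | | rewrite hj0].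
have xt : (nth 0%N p j0 < t)%N.
  case: (ltngtP (nth 0%N p j0) t) => // h.
    by have := q4 _ (pQ xp) h; rewrite leqNgt xy.
  by move: tp; rewrite -h xp.
have cond : (nx Qs N (nth 0%N p j0) < nth 0%N p j0.+1)%N.
  have [_ _ _ r4] := nx_spec sQ aQ (pQ xp).
  by rewrite ey; apply: leq_ltn_trans (r4 _ tQ xt) q1.
have zj0 : zeta j0 = t by rewrite /zeta cond ey pv_nx //; [exact: sQ | exact: aQ].
have bj0 : bb j0 = G y by rewrite /bb /F1 cond ey.
rewrite /cW tQ (Qnp tQ tp) subr0 (bigD1 (Ordinal j0k)) //= zj0 eqxx bj0.
rewrite big1 ?addr0 // => j ne; case: eqP => // tz; case: (bb j =P 0) => // /eqP bn.
have [_ _ ey2] := hj j tz bn.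
exfalso; move/negP: ne; apply; apply/eqP/val_inj => /=.
apply/eqP; rewrite -eqSS; apply/eqP.
rewrite -[j0.+1](index_uniq 0%N _ (suniq p_sorted)) ?hj0 //.
rewrite nth_index // /y ey2 index_uniq //; [exact: kS | exact: suniq p_sorted].
Qed.

Lemma zeta_vec : \sum_(j < k) bb j *: e (zeta j)
  = \sum_(t < N) (if TT t then cW t else 0) *: e t.
Proof.
transitivity (\sum_(j < k) \sum_(t < N) (if (t : nat) == zeta j then bb j *: e t else 0)).
  apply: eq_bigr => j _.
  rewrite (eq_bigr (fun t : 'I_N => if (t : nat) == zeta j then bb j *: e (zeta j) else 0)).
    by rewrite sum_delta // zetaN.
  by move=> t _; case: ifP => // /eqP ->.
rewrite exchange_big; apply: eq_bigr => t _.
rewrite (eq_bigr (fun j : 'I_k => (if (t : nat) == zeta j then bb j else 0) *: e t)).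
  by rewrite -scaler_suml zeta_coef.
by move=> j _; case: ifP; rewrite ?scale0r.
Qed.


Lemma main_ineq (K D : R)
  (hK : forall (N : nat) (a : nat -> R) (eps : nat -> bool),
    `|\sum_(i < N) (if eps i then a i else - a i) *: e i| <= K * `|\sum_(i < N) a i *: e i|)
  (hD : forall (k : nat) (m n : nat -> nat) (b : nat -> R),
    (forall i, (i < k)%N -> (m i <= n i)%N) ->
    (forall i, (i.+1 < k)%N -> (n i < m i.+1)%N) ->
    `|\sum_(i < k) b i *: e (m i)| <= D * `|\sum_(i < k) b i *: e (n i)|) :
  `|Vp| <= (1 + `|D| * ((1 + K) / 2) + 2 * ((1 + K) / 2)) * `|W|.
Proof.
set P := (1 + K) / 2.
have h2 : `|vd2| <= P * `|W|.
  by rewrite vd2_proj; exact: (proj_le hK N cW (fun t => (t \in Qs) && (t \notin p))).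
have h3 : `|G tL *: e tL| <= P * `|W|.
  by rewrite -normrN -tL_proj; exact: (proj_le hK N cW (fun t => t == tL)).
have h4 : `|\sum_(j < k) bb j *: e (zeta j)| <= P * `|W|.
  by rewrite zeta_vec; exact: (proj_le hK N cW TT).
have h1 : `|vd1| <= `|D| * (P * `|W|).
  have hR : `|\sum_(j < k) bb j *: e (nth 0%N p j)| <= D * `|\sum_(j < k) bb j *: e (zeta j)|.
    apply: hD.
  - move=> j jk; rewrite /zeta; case: ifP => // h.
    by case: (Zl (kS jk) h) => h1 _ _ _ _; apply: ltnW.
  - move=> j jk; rewrite /zeta; case: ifP => h.
      by case: (Zl (kS (ltnW jk)) h) => _ h5 _ _ _.
    by apply: nth_lt => //; [exact: p_sorted | apply: ltnW; apply: kS].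
  rewrite vd1_eq; apply: le_trans hR _.
  apply: le_trans (ler_wpM2r (normr_ge0 _) (ler_norm D)) _.
  by apply: ler_wpM2l => //; apply: normr_ge0.
rewrite Vp_eq.
have t1 : `|W + vd1 - vd2 + G tL *: e tL| <= `|W| + `|vd1| + `|vd2| + `|G tL *: e tL|.
  apply: le_trans (ler_normD _ _) _; rewrite lerD2r.
  apply: le_trans (ler_normB _ _) _; rewrite lerD2r; exact: ler_normD.
have -> : (1 + `|D| * P + 2 * P) * `|W| = `|W| + `|D| * (P * `|W|) + P * `|W| + P * `|W|.
  by ring.
move: t1 h1 h2 h3; set A := P * `|W|; set B := `|D| * A; lra.
Qed.

End Main.

Local Close Scope classical_set_scope.

Theorem lemma1 (R : realType) (E : completeNormedModType R) (e : nat -> E) :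
  schauder_basis e -> normalized e -> right_dominant e ->
  exists C : R, forall (l : nat) (n : nat -> nat) (a : nat -> R),
    (forall i, (i < l)%N -> (n i < n i.+1)%N) ->
    (forall i, (i < l)%N -> \sum_(n i <= j < n i.+1) a j = 0) ->
    exists (q : nat -> nat) (c : nat -> R),
      (forall i, (i < l)%N -> (q i < q i.+1)%N) /\
      (forall i, (i < l)%N -> `|blk e q c i| <= Jnorm e (restr a (n i) (n i.+1))) /\
      Jnorm e (restr a (n 0%N) (n l)) <= C * `|\sum_(i < l) blk e q c i|.
Proof.
move=> _ en [[K hK] [D hD]].
exists (2 * (1 + `|D| * ((1 + K) / 2) + 2 * ((1 + K) / 2))).
move=> l n a hn ha.
have bM : forall j, (n l <= j)%N -> restr a (n 0%N) (n l) j = 0.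
  by move=> j hj; rewrite /restr ltnNge hj andbF.
have [p [pp hp]] := near_opt en bM.
exists n, (cW l n a p); split; first exact: hn.
split.
  by move=> i il; exact: (blk_le en hn ha p il).
rewrite (W_blocks e hn ha p).
apply: le_trans hp _.
rewrite -[restr a _ _]/(al l n a) (Jval_al e l n a pp) -mulrA ler_pM2l //.
exact: (main_ineq hn ha pp hK hD).
Qed.
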